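(* Let $n$ be an odd integer with $n\ne5$, and let $1\le k<n$. Then in $\mathrm{Aut}(GPG(n,k))$: (i) the elements of odd order form a unique cyclic normal subgroup of order $n$; (ii) if $k\not\equiv\pm1\pmod n$, then no involution commutes with (every element of) this cyclic normal subgroup of order $n$.
   Context: The generalized Petersen graph $GPG(n,k)$ has vertex set $\{c_1,\dots,c_n,c_1',\dots,c_n'\}$ and edges $c_ic_{i+1}$, $c_ic_i'$, $c_i'c_{i+k}'$ for $i\in\{1,\dots,n\}$, subscripts read modulo $n$. *)

(* Defs.v *)
From mathcomp Require Import all_boot all_fingroup.
Set Implicit Arguments. Unset Strict Implicit. Unset Printing Implicit Defensive.

(* Vertices of GPG(n,k): inl i = c_i (outer), inr i = c_i' (inner), i in {0..n-1}
   (indices shifted by one w.r.t. the paper, subscripts mod n). *)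
Definition gpv (n : nat) : finType := ('I_n + 'I_n)%type.

Definition gpg_adj (n k : nat) (x y : gpv n) : bool :=
  match x, y with
  | inl i, inl j => (val j == (val i + 1) %% n) || (val i == (val j + 1) %% n)
  | inl i, inr j => val i == val j
  | inr i, inl j => val i == val j
  | inr i, inr j => (val j == (val i + k) %% n) || (val i == (val j + k) %% n)
  end.
Arguments gpg_adj : clear implicits.

Definition gpg_aut_set (n k : nat) : {set {perm gpv n}} :=
  [set s : {perm gpv n} | [forall x, forall y, gpg_adj n k (s x) (s y) == gpg_adj n k x y]].

Lemma gpg_aut_group_set n k : group_set (gpg_aut_set n k).
Proof.
apply/andP; split.
  by rewrite inE; apply/forallP => x; apply/forallP => y; rewrite !perm1.
apply/subsetP => _ /imset2P[s t Hs Ht ->].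
move: Hs Ht; rewrite !inE => /forallP Hs /forallP Ht.
apply/forallP => x; apply/forallP => y; rewrite !permM.
move: (forallP (Ht (s x)) (s y)) (forallP (Hs x) y) => /eqP -> /eqP ->.
by [].
Qed.

Canonical gpg_aut (n k : nat) : {group {perm gpv n}} := Group (gpg_aut_group_set n k).

Definition gpg_odd_elts (n k : nat) : {set {perm gpv n}} :=
  [set g in gpg_aut n k | odd #[g]%g].

(* Main.v *)
Require Import Defs.
From mathcomp Require Import all_boot all_fingroup all_solvable.
From mathcomp Require Import all_order all_algebra.
From mathcomp Require Import ring zify.
Set Implicit Arguments. Unset Strict Implicit. Unset Printing Implicit Defensive.
Import GRing.Theory.

Inductive mv := Op | Om | Ip | Im | Sp.
Definition mveq (x y : mv) : bool :=
  match x, y with Op,Op|Om,Om|Ip,Ip|Im,Im|Sp,Sp => true | _,_ => false end.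
Definition invm m := match m with Op=>Om|Om=>Op|Ip=>Im|Im=>Ip|Sp=>Sp end.
Definition validm (t:bool) m := match m with Op|Om => t | Ip|Im => ~~t | Sp => true end.
Definition allmv := [:: Op; Om; Ip; Im; Sp].
Definition dA m : int := match m with Op => 1%R | Om => (-1)%R | _ => 0%R end.
Definition dB m : int := match m with Ip => 1%R | Im => (-1)%R | _ => 0%R end.
Definition newt t m := if m is Sp then ~~t else t.
Fixpoint wc (fin : bool -> int -> int -> bool) (m : nat) (t : bool) (last : mv) (a b : int) : nat :=
 if m is m'.+1 then
   sumn [seq wc fin m' (newt t mv) mv (a + dA mv)%R (b + dB mv)%R
        | mv <- allmv & validm t mv && ~~ mveq mv (invm last)]
 else fin t a b.

Lemma wcS fin m t last a b : wc fin m.+1 t last a b =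
   sumn [seq wc fin m (newt t mv) mv (a + dA mv)%R (b + dB mv)%R
        | mv <- allmv & validm t mv && ~~ mveq mv (invm last)].
Proof. by []. Qed.

Lemma map_filter_ext (T U : Type) (P : pred T) (f g : T -> U) s :
  (forall x, P x -> f x = g x) -> [seq f x | x <- s & P x] = [seq g x | x <- s & P x].
Proof. by move=> H; elim: s => //= x s IH; case: ifP => //= /H ->; rewrite IH. Qed.

Lemma wc_box f g m : forall t l a b,
  (forall t' a' b', (absz (a' - a)%R + absz (b' - b)%R <= m)%N -> f t' a' b' = g t' a' b') ->
  wc f m t l a b = wc g m t l a b.
Proof.
elim: m => [|m IH] t l a b H; first by rewrite /= H // !subrr.
rewrite !wcS; congr sumn; apply: map_filter_ext => mv _; apply: IH => t' a' b' hb; apply: H.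
have : (absz (dA mv) + absz (dB mv) <= 1)%N by case: mv hb.
move: hb; move: (dA mv) (dB mv) => x y; lia.
Qed.

Definition finT (P : int -> int -> bool) (tt : bool) := fun t (a b : int) => (t == tt) && P a b.
Definition spF P L := wc (finT P true) L.-1 false Sp 0 0.
Definition spB P L := wc (finT P false) L.-1 true Sp 0 0.
Definition oF P L := wc (finT P true) L.-1 true Op 1 0.
Definition oB P L := wc (finT P true) L.-1 true Om (-1) 0.
Definition iF P L := wc (finT P false) L.-1 false Ip 0 1.
Definition iB P L := wc (finT P false) L.-1 false Im 0 (-1).
Definition Ls := [:: 3; 4; 5; 6; 7; 8]%N.
Definition dist P :=
  [&& has (fun L => (spF P L, spB P L) != (oF P L, oB P L)) Ls,
      has (fun L => (spF P L, spB P L) != (oB P L, oF P L)) Ls,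
      has (fun L => (spF P L, spB P L) != (iF P L, iB P L)) Ls &
      has (fun L => (spF P L, spB P L) != (iB P L, iF P L)) Ls].

Section Graph.
Variables q k : nat.
Local Notation n := q.+2.
Hypothesis oddn : odd n.
Hypothesis k0 : (0 < k)%N.
Hypothesis kn : (k < n)%N.
Local Open Scope ring_scope.

Definition V := gpv n.
Definition kk : 'I_n := k%:R.
Definition typ (x : V) : bool := if x is inl _ then true else false.
Definition pos (t : bool) (i : 'I_n) : V := if t then inl i else inr i.
Definition stepv (x : V) (m : mv) : V :=
  match x, m with
  | inl i, Op => inl (i+1) | inl i, Om => inl (i-1) | inl i, Sp => inr i
  | inr i, Ip => inr (i+kk) | inr i, Im => inr (i-kk) | inr i, Sp => inl i
  | _, _ => x end.

Lemma val_addZ (i j : 'I_n) : val (i + j) = ((val i + val j) %% n)%N.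
Proof. by []. Qed.
Lemma val_1Z : val (1 : 'I_n) = 1%N.
Proof. by rewrite /= modn_small. Qed.
Lemma val_kk : val kk = k.
Proof. by rewrite /kk Zp_nat /= modn_small. Qed.

Lemma adjOO (i j : 'I_n) : gpg_adj n k (inl i) (inl j) = (j == i + 1) || (j == i - 1).
Proof.
rewrite /gpg_adj -val_1Z -!val_addZ !val_eqE.
by congr (_ || _); apply/eqP/eqP => [->|->]; rewrite ?subrK ?addrK.
Qed.
Lemma adjII (i j : 'I_n) : gpg_adj n k (inr i) (inr j) = (j == i + kk) || (j == i - kk).
Proof.
rewrite /gpg_adj -val_kk -!val_addZ !val_eqE.
by congr (_ || _); apply/eqP/eqP => [->|->]; rewrite ?subrK ?addrK.
Qed.
Lemma adjOI (i j : 'I_n) : gpg_adj n k (inl i) (inr j) = (j == i).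
Proof. by rewrite /gpg_adj eq_sym. Qed.
Lemma adjIO (i j : 'I_n) : gpg_adj n k (inr i) (inl j) = (j == i).
Proof. by rewrite /gpg_adj eq_sym. Qed.

Lemma kk_neq0 : kk != 0.
Proof. by rewrite -val_eqE val_kk /= -lt0n. Qed.

Lemma two_neq0 : (2%:R : 'I_n) != 0.
Proof.
apply/eqP => /(congr1 val); rewrite Zp_nat /= => /eqP.
move: oddn; case: q => [|[|q']] //= _; rewrite modn_small //.
Qed.

Lemma twok_neq0 : kk *+ 2 != 0.
Proof.
apply/eqP => /(congr1 val); rewrite /kk -mulrnA Zp_nat /= => H.
have : (n %| k * 2)%N by rewrite /dvdn H.
rewrite Gauss_dvdl; last by rewrite coprimen2.
by move/(dvdn_leq k0); rewrite leqNgt kn.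
Qed.

Lemma p1m1 (i : 'I_n) : (i + 1 == i - 1) = false.
Proof.
apply/negbTE; apply: contra two_neq0 => /eqP H.
have: (i + 1) - (i - 1) = 0 by rewrite H subrr.
have ->: (i + 1) - (i - 1) = 2%:R by ring.
by move=> ->.
Qed.
Lemma pkmk (i : 'I_n) : (i + kk == i - kk) = false.
Proof.
apply/negbTE; apply: contra twok_neq0 => /eqP H.
have: (i + kk) - (i - kk) = 0 by rewrite H subrr.
have ->: (i + kk) - (i - kk) = kk *+ 2 by rewrite mulr2n; ring.
by move=> ->.
Qed.

Lemma sum2 (F : V -> nat) (P : pred V) a b : a != b -> P =1 pred2 a b ->
  (\sum_(y | P y) F y = F a + F b)%N.
Proof.
move=> ab HP; rewrite (bigD1 a) /=; last by rewrite HP /= eqxx.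
congr (_ + _)%N.
apply: big_pred1 => y; rewrite HP /=.
by case: (eqVneq y a) => [->|]; rewrite ?(negbTE ab) ?eqxx ?andbT ?andbF ?orbF ?(eq_sym a b) ?(negbTE ab).
Qed.

Lemma rm1 (T : eqType) (y A B C : T) : A != B -> A != C ->
  ((y==A)||(y==B)||(y==C)) && (y != A) = (y==B)||(y==C).
Proof. move=> h1 h2; case: (eqVneq y A) => [->|h]; rewrite ?eqxx ?(negbTE h1) ?(negbTE h2) //.
by rewrite andbT. Qed.
Lemma rm2 (T : eqType) (y A B C : T) : B != A -> B != C ->
  ((y==A)||(y==B)||(y==C)) && (y != B) = (y==A)||(y==C).
Proof. move=> h1 h2; case: (eqVneq y B) => [->|h]; rewrite ?eqxx ?(negbTE h1) ?(negbTE h2) ?orbT //.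
by rewrite andbT orbF. Qed.
Lemma rm3 (T : eqType) (y A B C : T) : C != A -> C != B ->
  ((y==A)||(y==B)||(y==C)) && (y != C) = (y==A)||(y==B).
Proof. move=> h1 h2; case: (eqVneq y C) => [->|h]; rewrite ?eqxx ?(negbTE h1) ?(negbTE h2) ?orbT //.
by rewrite andbT orbF. Qed.

Definition m1 (x : V) := if x is inl _ then Op else Ip.
Definition m2 (x : V) := if x is inl _ then Om else Im.

Lemma adjE x y : gpg_adj n k x y =
  (y == stepv x (m1 x)) || (y == stepv x (m2 x)) || (y == stepv x Sp).
Proof.
case: x => i; case: y => j.
- by rewrite adjOO /= !inj_eq //; [rewrite orbF | exact: inl_inj | exact: inl_inj].
- by rewrite adjOI /= !inj_eq //; exact: inr_inj.
- by rewrite adjIO /= !inj_eq //; exact: inl_inj.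
- by rewrite adjII /= !inj_eq //; [rewrite orbF | exact: inr_inj | exact: inr_inj].
Qed.

Lemma SL (F : V -> nat) (x : V) bm : validm (typ x) bm ->
  (\sum_(y | gpg_adj n k x y && (y != stepv x bm)) F y)%N =
  sumn [seq F (stepv x mv) | mv <- allmv & validm (typ x) mv && ~~ mveq mv bm].
Proof.
have d1 (i : 'I_n) : inl i != inl (i-1) :> V.
  by rewrite inj_eq; [rewrite -subr_eq0 opprB addrC subrK oner_eq0| exact: inl_inj].
have d2 (i : 'I_n) : inr i != inr (i-kk) :> V.
  rewrite inj_eq; last exact: inr_inj.
  by rewrite -subr_eq0 opprB addrC subrK kk_neq0.
have d3 (i : 'I_n) : inl (i+1) != inl (i-1) :> V.
  by rewrite inj_eq ?p1m1 //; exact: inl_inj.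
have d4 (i : 'I_n) : inr (i+kk) != inr (i-kk) :> V.
  by rewrite inj_eq ?pkmk //; exact: inr_inj.
have d5 (i : 'I_n) : inl (i+1) != inl i :> V.
  by rewrite (inj_eq inl_inj) -subr_eq0 addrAC subrr add0r oner_eq0.
have d6 (i : 'I_n) : inr (i+kk) != inr i :> V.
  by rewrite (inj_eq inr_inj) -subr_eq0 addrAC subrr add0r kk_neq0.
have o (i j : 'I_n) : inl i != inr j :> V by [].
have o' (i j : 'I_n) : inr i != inl j :> V by [].
rewrite (eq_bigl (fun y => ((y == stepv x (m1 x)) || (y == stepv x (m2 x)) || (y == stepv x Sp)) && (y != stepv x bm))); last by move=> y; rewrite adjE.
case: x => i; case: bm => //= _; rewrite addn0; apply: sum2 => // y /=.
- by rewrite rm1.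
- by rewrite rm2 // eq_sym.
- by rewrite rm3.
- by rewrite rm1.
- by rewrite rm2 // eq_sym.
- by rewrite rm3.
Qed.

Fixpoint nbw (z : V) (m : nat) (p x : V) : nat :=
  if m is m'.+1 then (\sum_(y | gpg_adj n k x y && (y != p)) nbw z m' x y)%N else (x == z).

Lemma nbw_inv (g : {perm V}) : (forall x y, gpg_adj n k (g x) (g y) = gpg_adj n k x y) ->
  forall m z p x, nbw (g z) m (g p) (g x) = nbw z m p x.
Proof.
move=> Hg; elim=> [|m IH] z p x /=; first by rewrite (inj_eq perm_inj).
rewrite (reindex_inj (@perm_inj _ g)) /=; apply: eq_big => y; first by rewrite Hg (inj_eq perm_inj).
by move=> _; apply: IH.
Qed.

Lemma nbwS z m p x : nbw z m.+1 p x = (\sum_(y | gpg_adj n k x y && (y != p)) nbw z m x y)%N.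
Proof. by []. Qed.

Lemma typ_pos t i : typ (pos t i) = t.
Proof. by case: t. Qed.

Lemma stepv_pos t i mv : validm t mv ->
  stepv (pos t i) mv = pos (newt t mv) (i + (dA mv)%:~R + (dB mv)%:~R * kk).
Proof.
by case: t; case: mv => //= _; congr (_ _); rewrite ?mulr0z ?mul0r ?addr0 ?mulN1r ?mul1r // ?mulrN1z.
Qed.

Lemma stepv_back t i mv : validm t mv -> stepv (stepv (pos t i) mv) (invm mv) = pos t i.
Proof. by case: t; case: mv => //= _; rewrite ?subrK ?addrK. Qed.

Lemma valid_back t mv : validm t mv -> validm (newt t mv) (invm mv).
Proof. by case: t; case: mv. Qed.

Lemma CR (z : V) (i0 : 'I_n) m : forall t last (a b : int) x p,
  x = pos t (i0 + a%:~R + b%:~R * kk) -> p = stepv x (invm last) -> validm t (invm last) ->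
  nbw z m p x = wc (fun t' a' b' => pos t' (i0 + a'%:~R + b'%:~R * kk) == z) m t last a b.
Proof.
elim: m => [|m IH] t last a b x p -> -> hv; first by [].
rewrite nbwS wcS SL typ_pos //; congr sumn; apply: map_filter_ext => mv /andP [vm _].
apply: IH; [ | | exact: valid_back].
- rewrite stepv_pos //; congr pos; rewrite !intrD; ring.
- by rewrite stepv_back.
Qed.

Definition Pz (a b : int) : bool := a%:~R + b%:~R * kk == 0 :> 'I_n.

Lemma CRT (i0 : 'I_n) tt m t last (a b : int) x p :
  x = pos t (i0 + a%:~R + b%:~R * kk) -> p = stepv x (invm last) -> validm t (invm last) ->
  nbw (pos tt i0) m p x = wc (finT Pz tt) m t last a b.
Proof.
move=> hx hp hv; rewrite (CR _ _ hx hp hv); apply: wc_box => t' a' b' _.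
rewrite /finT /Pz; case: t'; case: tt => //=;
  rewrite ?(inj_eq inl_inj) ?(inj_eq inr_inj) -addrA -{2}[i0]addr0 (inj_eq (addrI i0)) //.
Qed.

Ltac simpz := rewrite /= ?mulr0z ?mulr1z ?mulrN1z ?mul0r ?mul1r ?mulN1r ?addr0 ?addrK ?subrK.

Lemma cntS i L : nbw (inl i) L (inl i) (inr i) = wc (finT Pz true) L false Sp 0 0.
Proof. by apply: (@CRT i true L false Sp 0 0 (inr i) (inl i)); simpz. Qed.
Lemma cntS' i L : nbw (inr i) L (inr i) (inl i) = wc (finT Pz false) L true Sp 0 0.
Proof. by apply: (@CRT i false L true Sp 0 0 (inl i) (inr i)); simpz. Qed.
Lemma cntO j L : nbw (inl j) L (inl j) (inl (j+1)) = wc (finT Pz true) L true Op 1 0.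
Proof. by apply: (@CRT j true L true Op 1 0 (inl (j+1)) (inl j)); simpz. Qed.
Lemma cntO' j L : nbw (inl j) L (inl j) (inl (j-1)) = wc (finT Pz true) L true Om (-1) 0.
Proof. by apply: (@CRT j true L true Om (-1) 0 (inl (j-1)) (inl j)); simpz. Qed.
Lemma cntI j L : nbw (inr j) L (inr j) (inr (j+kk)) = wc (finT Pz false) L false Ip 0 1.
Proof. by apply: (@CRT j false L false Ip 0 1 (inr (j+kk)) (inr j)); simpz. Qed.
Lemma cntI' j L : nbw (inr j) L (inr j) (inr (j-kk)) = wc (finT Pz false) L false Im 0 (-1).
Proof. by apply: (@CRT j false L false Im 0 (-1) (inr (j-kk)) (inr j)); simpz. Qed.

Lemma cntOb j L : nbw (inl (j+1)) L (inl (j+1)) (inl j) = wc (finT Pz true) L true Om (-1) 0.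
Proof. by apply: (@CRT (j+1) true L true Om (-1) 0 (inl j) (inl (j+1))); simpz. Qed.
Lemma cntOb' j L : nbw (inl (j-1)) L (inl (j-1)) (inl j) = wc (finT Pz true) L true Op 1 0.
Proof. by apply: (@CRT (j-1) true L true Op 1 0 (inl j) (inl (j-1))); simpz. Qed.
Lemma cntIb j L : nbw (inr (j+kk)) L (inr (j+kk)) (inr j) = wc (finT Pz false) L false Im 0 (-1).
Proof. by apply: (@CRT (j+kk) false L false Im 0 (-1) (inr j) (inr (j+kk))); simpz. Qed.
Lemma cntIb' j L : nbw (inr (j-kk)) L (inr (j-kk)) (inr j) = wc (finT Pz false) L false Ip 0 1.
Proof. by apply: (@CRT (j-kk) false L false Ip 0 1 (inr j) (inr (j-kk))); simpz. Qed.

Definition isAut (g : {perm V}) := forall x y, gpg_adj n k (g x) (g y) = gpg_adj n k x y.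

Lemma autP g : g \in gpg_aut n k -> isAut g.
Proof. by rewrite inE => /forallP H x y; move/forallP: (H x) => /(_ y) /eqP. Qed.

Lemma spoke_pres g : isAut g -> dist Pz -> forall i, typ (g (inl i)) != typ (g (inr i)).
Proof.
move=> Hg D i.
have hS L : nbw (g (inl i)) L (g (inl i)) (g (inr i)) = wc (finT Pz true) L false Sp 0 0.
  by rewrite nbw_inv // cntS.
have hS' L : nbw (g (inr i)) L (g (inr i)) (g (inl i)) = wc (finT Pz false) L true Sp 0 0.
  by rewrite nbw_inv // cntS'.
have A : gpg_adj n k (g (inl i)) (g (inr i)) by rewrite Hg adjOI.
move/and4P: D => [D1 D2 D3 D4].
move: hS hS' A; case: (g (inl i)) => j; case: (g (inr i)) => j' hS hS' //.
- rewrite adjOO => /orP [] /eqP Ej; subst j'.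
  + by move/hasP: D1 => [L _]; rewrite /spF /spB /oF /oB -hS -hS' cntO cntOb eqxx.
  + by move/hasP: D2 => [L _]; rewrite /spF /spB /oF /oB -hS -hS' cntO' cntOb' eqxx.
- rewrite adjII => /orP [] /eqP Ej; subst j'.
  + by move/hasP: D3 => [L _]; rewrite /spF /spB /iF /iB -hS -hS' cntI cntIb eqxx.
  + by move/hasP: D4 => [L _]; rewrite /spF /spB /iF /iB -hS -hS' cntI' cntIb' eqxx.
Qed.

End Graph.


Definition Pn (n k : nat) (a b : int) : bool := (n %| absz (a + b * k%:Z)%R)%N.
Definition smallNs := [seq n <- iota 3 61 | odd n && (n != 5)]%N.
Definition check_small := all (fun n => all (fun k => dist (Pn n k)) (iota 1 n.-1)) smallNs.
Lemma check_small_ok : all (fun n => all (fun k => dist (Pn n k)) (iota 1 n.-1)) smallNs. Proof. by vm_compute. Qed.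

Definition rng : seq int := [seq (x%:Z - 8)%R | x <- iota 0 17].
Definition nrm (u : int * int) := (absz u.1 + absz u.2)%N.
Definition Blist : seq (int * int) := [seq u <- [seq (a, b) | a <- rng, b <- rng] | (nrm u <= 8)%N].
Definition det (u w : int * int) : int := (u.1 * w.2 - w.1 * u.2)%R.
Definition Qm (u : int * int) (a b : int) : bool := ((u.2 %| b)%Z && (a * u.2 == u.1 * b))%R.
Definition Q0 (a b : int) : bool := (a == 0%R) && (b == 0%R).
Definition rsl : seq (int * int) := [seq (a, b) | a <- rng, b <- rng].
Definition lin (r s : int) (u w : int * int) := ((r * u.1 + s * w.1)%R, (r * u.2 + s * w.2)%R).
Definition cert u w := has (fun rs => (lin rs.1 rs.2 u w != (0%R,0%R)) && (nrm (lin rs.1 rs.2 u w) < nrm u)%N) rsl.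
Definition check1 := all (fun u => if u == (0%R,0%R) then true else all (fun w => if det u w == 0%R then (if Qm u w.1 w.2 then true else cert u w) else true) Blist) Blist.
Definition check_det := all (fun u => all (fun w => (absz (det u w) <= 64)%N) Blist) Blist.
Definition evn (z : int) := (2 %| z)%Z.
Definition halfv (u : int * int) := ((u.1 %/ 2)%Z, (u.2 %/ 2)%Z).
Definition check_half := all (fun u => (evn u.1 && evn u.2 && (u != (0%R,0%R))) ==>
   [&& halfv u != (0%R,0%R), (nrm (halfv u) < nrm u)%N & u == ((2 * (halfv u).1)%R, (2 * (halfv u).2)%R)]) Blist.
Definition check_cand := dist Q0 && all (fun u => ((u.2 != 0%R) && ~~ (evn u.1 && evn u.2)) ==> dist (Qm u)) Blist.
Lemma check1_ok : all (fun u => if u == (0%R,0%R) then true else all (fun w => if det u w == 0%R then (if Qm u w.1 w.2 then true else cert u w) else true) Blist) Blist. Proof. by vm_compute. Qed.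
Lemma check_det_ok : all (fun u => all (fun w => (absz (det u w) <= 64)%N) Blist) Blist. Proof. by vm_compute. Qed.
Lemma check_half_ok : all (fun u => (evn u.1 && evn u.2 && (u != (0%R,0%R))) ==>
   [&& halfv u != (0%R,0%R), (nrm (halfv u) < nrm u)%N & u == ((2 * (halfv u).1)%R, (2 * (halfv u).2)%R)]) Blist. Proof. by vm_compute. Qed.
Lemma check_cand_ok : dist Q0 && all (fun u => ((u.2 != 0%R) && ~~ (evn u.1 && evn u.2)) ==> dist (Qm u)) Blist. Proof. by vm_compute. Qed.


Lemma mem_rng (a : int) : (absz a <= 8)%N -> a \in rng.
Proof.
move=> h; apply/mapP; exists (absz (a + 8)%R); first by rewrite mem_iota; lia.
lia.
Qed.

Lemma mem_Blist (u : int * int) : (nrm u <= 8)%N -> u \in Blist.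
Proof.
case: u => a b h; rewrite /Blist mem_filter h andTb.
rewrite /nrm /= in h; apply/flatten_mapP; exists a; first by apply: mem_rng; lia.
apply/mapP; exists b => //; apply: mem_rng; lia.
Qed.

Lemma Blist_nrm u : u \in Blist -> (nrm u <= 8)%N.
Proof. by rewrite mem_filter => /andP []. Qed.

Lemma dist_box P P' : (forall a b, (absz a + absz b <= 8)%N -> P a b = P' a b) -> dist P = dist P'.
Proof.
move=> H.
have E : forall L, (L <= 8)%N -> forall tt t l (a b : int), (absz a + absz b <= 1)%N ->
  wc (finT P tt) L.-1 t l a b = wc (finT P' tt) L.-1 t l a b.
  move=> L hL tt t l a b hab; apply: wc_box => t' a' b' h; rewrite /finT H //.
  move: h hab; case: L hL => [|L] /= hL; lia.
have HL : all (fun L => L <= 8)%N Ls by [].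
rewrite /dist /spF /spB /oF /oB /iF /iB.
congr [&& _, _, _ & _]; apply: eq_in_has => L /(allP HL) hL; rewrite !E //.
Qed.

Section Large.
Variables q k : nat.
Local Notation n := q.+2.
Hypothesis oddn : odd n.
Hypothesis k0 : (0 < k)%N.
Hypothesis kn : (k < n)%N.
Local Open Scope ring_scope.
Local Notation Pz := (Pz q k).
Local Notation kk := (kk q k).

Lemma intZp0 (z : int) : (z%:~R == 0 :> 'I_n) = (n %| absz z)%N.
Proof.
have H (m : nat) : (m%:R == 0 :> 'I_n) = (n %| m)%N by rewrite -(inj_eq val_inj) Zp_nat.
case: z => m; first by rewrite -pmulrn H.
by rewrite NegzE mulrNz oppr_eq0 -pmulrn H.
Qed.

Lemma PzE a b : Pz a b = Pn n k a b.
Proof. by rewrite /Pz /Pn -intZp0 intrD intrM /kk. Qed.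

Lemma Pz_lin (r s a0 b0 a b : int) : Pz a0 b0 -> Pz a b -> Pz (r * a0 + s * a) (r * b0 + s * b).
Proof.
rewrite /Pz => /eqP h1 /eqP h2; apply/eqP.
have -> : (r * a0 + s * a)%:~R + (r * b0 + s * b)%:~R * kk =
   r%:~R * (a0%:~R + b0%:~R * kk) + s%:~R * (a%:~R + b%:~R * kk) :> 'I_n.
  by rewrite !intrD !intrM; ring.
by rewrite h1 h2 !mulr0 addr0.
Qed.

Lemma Pz_det u w : Pz u.1 u.2 -> Pz w.1 w.2 -> (n %| absz (det u w))%N.
Proof.
rewrite /Pz -intZp0 => /eqP h1 /eqP h2; apply/eqP.
have -> : (det u w)%:~R = w.2%:~R * (u.1%:~R + u.2%:~R * kk) - u.2%:~R * (w.1%:~R + w.2%:~R * kk) :> 'I_n.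
  by rewrite /det intrB !intrM; ring.
by rewrite h1 h2 !mulr0 subr0.
Qed.
Lemma Pz_half a b : Pz (2 * a) (2 * b) -> Pz a b.
Proof.
rewrite /Pz => /eqP h; set y := a%:~R + b%:~R * kk.
have e : y + y = 0 by rewrite -h /y !intrM; ring.
have : (n %| val y * 2)%N.
  by move/(congr1 val): e => /= e'; rewrite /dvdn muln2 -addnn e'.
rewrite Gauss_dvdl ?coprimen2 // => hd; apply/eqP/val_inj => /=.
case: (posnP (val y)) => // yp; move: (dvdn_leq yp hd); rewrite leqNgt ltn_ord.
by [].
Qed.

Lemma dist_large : (64 < n)%N -> dist Pz.
Proof.
move=> big.
have P0 a : (absz a <= 8)%N -> Pz a 0 -> a = 0.
  move=> ha; rewrite PzE /Pn mul0r addr0 => hd; apply/eqP; rewrite -absz_eq0; apply/eqP.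
  case: (posnP (absz a)) => // ap; move: (dvdn_leq ap hd); lia.
have Pdet u w : u \in Blist -> w \in Blist -> Pz u.1 u.2 -> Pz w.1 w.2 -> det u w = 0.
  move=> hu hw h1 h2; have hd := Pz_det h1 h2; have := allP (allP check_det_ok u hu) w hw.
  move=> hle; apply/eqP; rewrite -absz_eq0; apply/eqP.
  case: (posnP (absz (det u w))) => // dp; move: (dvdn_leq dp hd); lia.
case Hex: (has (fun u => (u != (0,0)) && Pz u.1 u.2) Blist).
- have exN : exists N, has (fun u => (u != (0,0)) && Pz u.1 u.2 && (nrm u == N)) Blist.
    move/hasP: Hex => [u hu /andP[h1 h2]]; exists (nrm u); apply/hasP; exists u => //.
    by rewrite h1 h2 eqxx.
  case: (ex_minnP exN) => N /hasP [[a0 b0] hu /andP [/andP [nz Pu] /eqP Nu]] minN.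
  have minu v : v \in Blist -> v != (0,0) -> Pz v.1 v.2 -> (nrm (a0, b0) <= nrm v)%N.
    move=> hv nzv Pv; rewrite Nu; apply: minN; apply/hasP; exists v => //; by rewrite nzv Pv eqxx.
  have hu8 := Blist_nrm hu.
  have u2 : b0 != 0.
    apply/eqP => hb; move: Pu nz hu8; rewrite hb /= => Pu nz hu8.
    by move: nz; rewrite (P0 a0) ?eqxx //; move: hu8; rewrite /nrm /=; lia.
  have ne : ~~ (evn a0 && evn b0).
    apply/negP => ev; move: (allP check_half_ok _ hu); rewrite /= ev nz /=.
    case/and3P => hnz hlt /eqP hu2.
    have Ph : Pz (halfv (a0, b0)).1 (halfv (a0, b0)).2.
      by apply: Pz_half; case: hu2 => <- <-.
    have hm : halfv (a0, b0) \in Blist.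
      by apply: mem_Blist; apply: leq_trans hu8; apply: ltnW.
    by have := minu _ hm hnz Ph; rewrite leqNgt hlt.
  have agree a b : (absz a + absz b <= 8)%N -> Pz a b = Qm (a0, b0) a b.
    move=> hab; apply/idP/idP.
    + move=> Pw; have hw : (a, b) \in Blist by apply: mem_Blist.
      have d0 := Pdet (a0, b0) (a, b) hu hw Pu Pw.
      move: (allP check1_ok _ hu); rewrite (negbTE nz) => /allP /(_ _ hw); rewrite d0 eqxx.
      case: ifP => // _ /hasP [[r s] _ /andP [znz zlt]].
      have Pz' := Pz_lin r s Pu Pw.
      have hm : lin r s (a0, b0) (a, b) \in Blist.
        by apply: mem_Blist; apply: leq_trans hu8; apply: ltnW.
      by have := minu _ hm znz Pz'; rewrite leqNgt zlt.
    + rewrite /Qm /= => /andP [/dvdzP [t ->] /eqP e].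
      have ea : a = t * a0.
        by apply: (mulIf u2); rewrite e mulrA [a0 * t]mulrC.
      have := Pz_lin t 0 Pu Pu; rewrite !mul0r !addr0 ea => h.
      by [].
  rewrite (dist_box agree).
  by case/andP: check_cand_ok => _ /allP /(_ _ hu) /implyP; apply; apply/andP; split.
- have agree a b : (absz a + absz b <= 8)%N -> Pz a b = Q0 a b.
    move=> hab; rewrite /Q0; case: (eqVneq (a, b) (0, 0)) => [[-> ->]|nz].
      by rewrite /Pz !mulr0z mul0r addr0 eqxx.
    have : (a, b) \in Blist by apply: mem_Blist.
    move/hasPn: (negbT Hex) => H /H; rewrite /= nz /= => /negbTE ->.
    by case: (a =P 0) nz => [->|//]; case: (b =P 0) => [->|]; rewrite ?eqxx.
  rewrite (dist_box agree).
  by case/andP: check_cand_ok.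
Qed.

Lemma dist_all : n != 5%N -> dist Pz.
Proof.
move=> n5; case: (ltnP 64 n) => [|small]; first exact: dist_large.
have : all (fun k => dist (Pn n k)) (iota 1 n.-1).
  apply: (allP check_small_ok); rewrite mem_filter oddn n5 mem_iota /=.
  have n64 : n != 64%N by apply/negP => /eqP e; move: oddn; rewrite e.
  move: oddn small n64; case: q => [|q'] //= _; lia.
move/allP/(_ k); rewrite mem_iota => /(_ _) H.
have : dist (Pn n k) by apply: H; lia.
by rewrite -(@dist_box Pz) // => a b _; rewrite PzE.
Qed.

End Large.


Section Struct.
Variables q k : nat.
Local Notation n := q.+2.
Hypothesis oddn : odd n.
Hypothesis k0 : (0 < k)%N.
Hypothesis kn : (k < n)%N.
Hypothesis n5 : n != 5%N.
Local Notation V := (V q).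
Local Notation typ := (@typ q).
Local Notation isAut := (@isAut q k).
Local Notation kk := (kk q k).
Local Open Scope ring_scope.

Lemma SP g : isAut g -> forall i, typ (g (inl i)) != typ (g (inr i)).
Proof. by move=> Hg; apply: (spoke_pres oddn k0 kn Hg (dist_all oddn k0 kn n5)). Qed.

Lemma isAutV g : isAut g -> isAut g^-1%g.
Proof. by move=> Hg x y; rewrite -Hg !permKV. Qed.

Lemma spoke_back g x y : isAut g -> gpg_adj n k x y -> typ (g x) != typ (g y) -> typ x != typ y.
Proof.
move=> Hg; rewrite -Hg => A D.
have [[m [e1 e2]] | [m [e1 e2]]] : (exists m, g x = inl m /\ g y = inr m) \/ (exists m, g x = inr m /\ g y = inl m).
- move: A D; case: (g x) => i; case: (g y) => j; rewrite ?adjOI ?adjIO //= => /eqP -> _.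
  + by left; exists i.
  + by right; exists i.
- by have := SP (isAutV Hg) m; rewrite -e1 -e2 !permK.
- by have := SP (isAutV Hg) m; rewrite -e1 -e2 !permK eq_sym.
Qed.


Lemma typ_out g : isAut g -> forall m : nat, typ (g (inl m%:R)) = typ (g (inl 0)).
Proof.
move=> Hg; elim=> [|m IH] //.
have A : gpg_adj n k (inl m%:R) (inl m.+1%:R) by rewrite adjOO mulrSr eqxx.
case: (eqVneq (typ (g (inl m.+1%:R))) (typ (g (inl m%:R)))) => [->|D] //.
by have := spoke_back Hg A; rewrite eq_sym D => /(_ isT).
Qed.

Lemma typ_all g : isAut g -> forall x, typ (g x) = (typ x == typ (g (inl 0))).
Proof.
move=> Hg [] i.
  by have := typ_out Hg i; rewrite natr_Zp => ->; case: (typ _).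
have h := SP Hg i; have h2 := typ_out Hg i; rewrite natr_Zp in h2.
by move: h; rewrite h2 /=; case: (typ _); case: (typ _).
Qed.

Definition shf (c : 'I_n) (x : V) : V := match x with inl i => inl (i + c) | inr i => inr (i + c) end.
Lemma shfK c : cancel (shf c) (shf (-c)).
Proof. by case=> i /=; rewrite addrK. Qed.
Lemma shfl c i : shf c (inl i) = inl (i + c). Proof. by []. Qed.
Lemma shfr c i : shf c (inr i) = inr (i + c). Proof. by []. Qed.
Definition rho : {perm V} := perm (can_inj (shfK 1)).
Lemma rhoE x : rho x = shf 1 x.
Proof. by rewrite permE. Qed.
Lemma rhoX m x : (rho ^+ m)%g x = shf m%:R x.
Proof.
elim: m x => [|m IH] x; first by rewrite expg0 perm1; case: x => i /=; rewrite addr0.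
by rewrite expgSr permM IH rhoE; case: x => i /=; rewrite mulrSr addrA.
Qed.

Lemma rho_aut : isAut rho.
Proof.
have shl c i : shf c (inl i) = inl (i + c) by [].
have shr c i : shf c (inr i) = inr (i + c) by [].
move=> x y; rewrite !rhoE; case: x => i; case: y => j;
  rewrite ?shl ?shr ?adjOO ?adjII ?adjOI ?adjIO ?(inj_eq (addIr 1)) //.
- by rewrite (addrAC i 1 (-1)) !(inj_eq (addIr 1)).
- by rewrite (addrAC i 1 kk) (addrAC i 1 (-kk)) !(inj_eq (addIr 1)).
Qed.

Lemma rho_in : rho \in gpg_aut n k.
Proof. by rewrite inE; apply/forallP => x; apply/forallP => y; rewrite rho_aut. Qed.

Lemma natr0 (m : nat) : (m%:R == 0 :> 'I_n) = (n %| m)%N.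
Proof. by rewrite -(inj_eq val_inj) Zp_nat. Qed.

Lemma order_rho : #[rho]%g = n.
Proof.
have Hn : (rho ^+ n)%g = 1%g.
  apply/permP => x; rewrite rhoX perm1.
  have -> : (n%:R : 'I_n) = 0 by apply/eqP; rewrite natr0.
  by case: x => i /=; rewrite addr0.
have H m : (rho ^+ m)%g = 1%g -> (n %| m)%N.
  move/(congr1 (fun p : {perm V} => p (inl 0))); rewrite rhoX perm1 /= add0r.
  by move=> [] /eqP; rewrite natr0.
by apply/eqP; rewrite eqn_dvd order_dvdn Hn eqxx /= H // expg_order.
Qed.

Lemma rot_or_refl h : isAut h -> typ (h (inl 0)) ->
  (exists a : nat, h = (rho ^+ a)%g) \/
  (exists a : 'I_n, forall i, h (inl i) = inl (a - i) /\ h (inr i) = inr (a - i)).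
Proof.
move=> Hh T.
have Tp x : typ (h x) = typ x by rewrite typ_all // T; case: (typ x).
case E0: (h (inl 0)) T => [a|a] // _.
have A1 : gpg_adj n k (h (inl 0)) (h (inl 1)) by rewrite Hh adjOO add0r eqxx.
case E1: (h (inl 1)) A1 => [b|b]; last by have := Tp (inl 1); rewrite E1.
rewrite E0 adjOO => A1.
have [e [He Hb]] : exists e : 'I_n, (e = 1 \/ e = -1) /\ b = a + e.
  by case/orP: A1 => /eqP ->; [exists 1; split; [left|] | exists (-1); split; [right|]].
have pm (x y : 'I_n) : (y == x + 1) || (y == x - 1) -> (y == x + e) || (y == x - e).
  by case: He => ->; rewrite ?opprK // orbC.
have claim m : h (inl m%:R) = inl (a + e * m%:R) /\ h (inl m.+1%:R) = inl (a + e * m.+1%:R).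
  elim: m => [|m [IH1 IH2]]; first by rewrite E0 E1 Hb mulr0 addr0 mulr1.
  split => //.
  have A : gpg_adj n k (h (inl m.+1%:R)) (h (inl m.+2%:R)) by rewrite Hh adjOO [m.+2%:R]mulrSr eqxx.
  case E: (h (inl m.+2%:R)) A => [c|c]; last by have := Tp (inl m.+2%:R); rewrite E.
  rewrite IH2 adjOO => /pm /orP [] /eqP Ec.
    by rewrite Ec [m.+2%:R]mulrSr mulrDr mulr1 addrA.
  have : h (inl m.+2%:R) = h (inl m%:R).
    by rewrite E IH1 Ec mulrSr mulrDr mulr1 addrA addrK.
  move/perm_inj => [] /eqP; rewrite -subr_eq0.
  have -> : (m.+2%:R - m%:R : 'I_n) = 2%:R by rewrite !mulrSr; ring.
  by rewrite (negbTE (two_neq0 oddn)).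
have Hl i : h (inl i) = inl (a + e * i) by rewrite -{1}(natr_Zp i) (proj1 (claim _)) natr_Zp.
have Hr i : h (inr i) = inr (a + e * i).
  have A : gpg_adj n k (h (inl i)) (h (inr i)) by rewrite Hh adjOI.
  case E: (h (inr i)) A => [c|c]; first by have := Tp (inr i); rewrite E.
  by rewrite Hl adjOI => /eqP ->.
case: He => He; [left; exists (val a) | right; exists a] => [|i].
  apply/permP => x; rewrite rhoX natr_Zp; case: x => i /=; rewrite ?Hl ?Hr He mul1r addrC //.
by rewrite Hl Hr He !mulN1r.
Qed.

Lemma refl_inv (h : {perm V}) (a : 'I_n) : (forall i, h (inl i) = inl (a - i) /\ h (inr i) = inr (a - i)) ->
  (h * h)%g = 1%g.
Proof.
move=> H; apply/permP => x; rewrite permM perm1; case: x => i.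
  by rewrite (proj1 (H i)) (proj1 (H _)) opprB addrC subrK.
by rewrite (proj2 (H i)) (proj2 (H _)) opprB addrC subrK.
Qed.

Lemma isAutM g h : isAut g -> isAut h -> isAut (g * h)%g.
Proof. by move=> Hg Hh x y; rewrite !permM Hh Hg. Qed.

Lemma g2_pres g : isAut g -> typ ((g * g)%g (inl 0)).
Proof.
by move=> Hg; rewrite permM typ_all // [typ (g (inl 0))]typ_all //=; case: (typ _).
Qed.


Lemma rho_cycle_odd x : x \in <[rho]>%g -> odd #[x]%g.
Proof. by move=> hx; apply: (dvdn_odd (order_dvdG hx)); rewrite -orderE order_rho. Qed.

Lemma cycle_sub_aut : (<[rho]> \subset gpg_aut n k)%g.
Proof. by rewrite cycle_subG rho_in. Qed.

Lemma odd_in_rho g : g \in gpg_aut n k -> odd #[g]%g -> g \in <[rho]>%g.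
Proof.
move=> gA og; have Hg := autP gA.
have gE : g = ((g * g) ^+ (#[g]%g.+1)./2)%g.
  have -> : (g * g = g ^+ 2)%g by rewrite expgS expg1.
  rewrite -expgM mul2n.
  have := odd_double_half (#[g]%g.+1); rewrite /= og /= add0n => ->.
  by rewrite expgSr expg_order mul1g.
case: (rot_or_refl (isAutM Hg Hg) (g2_pres Hg)) => [[a ha] | [a ha]].
  by rewrite gE ha groupX // mem_cycle.
have h4 : (g ^+ 4 = 1)%g.
  by rewrite -(refl_inv ha) !expgS expg0 mulg1 !mulgA.
have d : (#[g]%g %| 4)%N by rewrite order_dvdn h4.
have : #[g]%g = 1%N.
  move: og d (@dvdn_leq _ 4 isT d); case: (#[g]%g) => [|[|[|[|[|m]]]]] //.
by move/eqP; rewrite order_eq1 => /eqP ->; apply: group1.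
Qed.

Lemma OE : gpg_odd_elts n k = <[rho]>%g.
Proof.
apply/setP => x; rewrite inE; apply/andP/idP => [[xA ox]|hx]; first exact: odd_in_rho.
by split; [apply: (subsetP cycle_sub_aut) | apply: rho_cycle_odd].
Qed.

End Struct.

Theorem lemma6p2 (n k : nat) :
  odd n -> n != 5 -> 0 < k < n ->
  [/\ group_set (gpg_odd_elts n k),
      cyclic (gpg_odd_elts n k),
      (gpg_odd_elts n k <| gpg_aut n k)%g,
      #|gpg_odd_elts n k| = n
    & (forall H : {group {perm gpv n}},
          cyclic H -> (H <| gpg_aut n k)%g -> #|H| = n -> H :=: gpg_odd_elts n k)]
  /\
  (k <> 1 %[mod n] -> k + 1 <> 0 %[mod n] ->
   forall g : {perm gpv n}, g \in gpg_aut n k -> #[g]%g = 2 ->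
   ~ (forall x, x \in gpg_odd_elts n k -> commute g x)).
Proof.
case: n => [|[|q]] //; first by move=> _ _; case: k => [|[]].
move=> oddn n5 /andP [k0 kn].
have OE := OE oddn k0 kn n5.
have ord := order_rho q.
split.
  split.
  - by rewrite OE; apply: groupP.
  - by rewrite OE cycle_cyclic.
  - rewrite /normal; apply/andP; split; first by rewrite OE cycle_sub_aut.
    apply/normsP.
    move=> x xA; apply/eqP; rewrite eqEcard cardJg leqnn andbT.
    apply/subsetP => y; rewrite mem_conjg inE => /andP [yA oy].
    rewrite inE; apply/andP; split.
      by rewrite -(conjgKV x y) groupJ // groupV.
    by rewrite -(orderJ y x^-1).
  - by rewrite OE -orderE ord.
  - move=> H _ nH cH; apply/eqP; rewrite eqEcard cH OE -orderE ord leqnn andbT.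
    apply/subsetP => h hH; rewrite -OE inE (subsetP (normal_sub nH)) //=.
    by apply: (dvdn_odd (order_dvdG hH)); rewrite cH.
move=> k1 k2 g gA og C.
have Hg := autP gA.
have rO : rho q \in gpg_odd_elts q.+2 k by rewrite OE cycle_id.
have Cr : (g * rho q)%g (inl 0%R) = (rho q * g)%g (inl 0%R) by rewrite (C _ rO).
rewrite !permM in Cr.
case T: (typ (g (inl 0%R))).
  case: (rot_or_refl oddn k0 kn n5 Hg T) => [[a ha]|[a ha]].
    have : odd #[g]%g by rewrite ha; apply: rho_cycle_odd; rewrite // mem_cycle.
    by rewrite og.
  move: Cr; rewrite !rhoE (proj1 (ha _)) !shfl (proj1 (ha _)).
  move=> /(congr1 (fun x => if x is inl i then i else 0%R)) /eqP.
  by rewrite GRing.subr0 GRing.add0r p1m1.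
case E0: (g (inl 0%R)) T => [a|a] // _.
have A : gpg_adj q.+2 k (g (inl 0%R)) (g (inl 1%R)) by rewrite Hg adjOO GRing.add0r eqxx.
move: Cr A; rewrite !rhoE E0 !shfr !shfl GRing.add0r => <-; rewrite adjII //.
move=> /orP [] /eqP E.
  have E1 : (1%R : 'I_q.+2) = kk q k by rewrite -(GRing.addKr a 1%R) E GRing.addKr.
  apply: k1; move/(congr1 val): E1; rewrite val_1Z val_kk // => <-; by [].
have E1 : (kk q k + 1 = 0 :> 'I_q.+2)%R.
  by rewrite -(GRing.addKr a 1%R) E GRing.addKr GRing.subrr.
apply: k2; move: E1; rewrite /kk -GRing.mulrSr => /eqP; rewrite natr0 => /eqP.
by rewrite mod0n addn1.
Qed.
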